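(* Let $T$ be a finite rooted tree in which every inner node has at least two children, with node set $V$ and leaf set $L$. Let $S\subseteq V\setminus L$ and let $(\pi,\sigma)$ be a pair of injective maps $S\to L$ which identifies $S$ and has unique request. Then for each $a\in\pi(S)$, the node $\pi^{-1}(a)$ is the least ancestor of $a$ which belongs to $S$.
   Context: Every node is its own ancestor and descendant. A pair $(\pi,\sigma)$ of injective maps from $S\subseteq V\setminus L$ to $L$ identifies $S$ if for each $s\in S$, $s$ is the least common ancestor of $\pi(s)$ and $\sigma(s)$. For $s\in S$, a node $x$ is $s$-requested in $(\pi,\sigma)$ if $x$ lies on the path of $T$ from $\pi(s)$ to $\sigma(s)$. The pair has unique request if every node of $T$ is $s$-requested for at most one $s\in S$. *)

(* Defs.v *)
(* A finite rooted tree on a finType V is given by a parent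
   map with the root as its unique fixed point and every node reaching the root. *)
From mathcomp Require Import all_boot.
Set Implicit Arguments. Unset Strict Implicit. Unset Printing Implicit Defensive.

Section Tree.
Variables (V : finType) (parent : V -> V) (root : V).

Definition rooted_tree : Prop :=
  parent root = root /\ forall v : V, exists k, iter k parent v = root.

Definition children (v : V) : {set V} := [set u | (parent u == v) && (u != root)].

Definition is_leaf (v : V) : bool := children v == set0.

Definition leaves : {set V} := [set v | is_leaf v].

Definition inner_ge2 : Prop := forall v : V, ~~ is_leaf v -> 2 <= #|children v|.

(* a is an ancestor of x (every node is its own ancestor) *)
Definition ancestor (a x : V) : Prop := exists k, iter k parent x = a.

Definition is_lca (s x y : V) : Prop :=
  ancestor s x /\ ancestor s y /\
  forall c, ancestor c x -> ancestor c y -> ancestor c s.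

(* node set of the tree path between x and y, with s = lca(x,y):
   the nodes that are descendants of s and ancestors of x or of y *)
Definition on_path (x y z : V) : Prop :=
  exists s, is_lca s x y /\ ancestor s z /\ (ancestor z x \/ ancestor z y).

Definition identifies (S : {set V}) (pi sigma : V -> V) : Prop :=
  forall s, s \in S -> is_lca s (pi s) (sigma s).

Definition requested (pi sigma : V -> V) (s x : V) : Prop := on_path (pi s) (sigma s) x.

Definition unique_request (S : {set V}) (pi sigma : V -> V) : Prop :=
  forall x s t, s \in S -> t \in S ->
    requested pi sigma s x -> requested pi sigma t x -> s = t.

End Tree.

(* Main.v *)
Require Import Defs.
From mathcomp Require Import all_boot.

Lemma anc_chain (V : Type) (f : V -> V) x a b :
  (exists k, iter k f (iter a f x) = iter b f x) \/
  (exists k, iter k f (iter b f x) = iter a f x).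
Proof.
case: (leqP a b) => h.
- left; exists (b - a); by rewrite -iterD subnK.
- right; exists (a - b); rewrite -iterD subnK //; exact: ltnW.
Qed.

Theorem lemma3p3 (V : finType) (parent : V -> V) (root : V)
  (Htree : rooted_tree parent root) (Hinner : inner_ge2 parent root)
  (S : {set V}) (pi sigma : V -> V)
  (HS : forall s, s \in S -> s \notin leaves parent root)
  (Hpi_leaf : forall s, s \in S -> pi s \in leaves parent root)
  (Hsigma_leaf : forall s, s \in S -> sigma s \in leaves parent root)
  (Hpi_inj : {in S &, injective pi})
  (Hsigma_inj : {in S &, injective sigma})
  (Hid : identifies parent S pi sigma)
  (Huniq : unique_request parent S pi sigma) :
  forall s, s \in S ->
    (* s = pi^-1(pi s) is the least ancestor of a := pi s lying in S *)
    ancestor parent s (pi s) /\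
    forall t, t \in S -> ancestor parent t (pi s) -> ancestor parent t s.
Proof.
move=> s sS.
have [Hs1 [Hs2 Hs3]] := Hid s sS.
split => // t tS [a Ha].
have [b Hb] := Hs1.
case: (@anc_chain V parent (pi s) a b) => [[k Hk]|[k Hk]].
- have ->: s = t.
    apply: (Huniq t s t sS tS).
    + exists s; split; first exact: Hid.
      split; first by exists k; rewrite -Ha Hk Hb.
      by left; exists a.
    + have [Ht1 [Ht2 Ht3]] := Hid t tS.
      exists t; split; first exact: Hid.
      split; first by exists 0.
      by left.
  by exists 0.
- by exists k; rewrite -Ha -Hk Hb.
Qed.
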